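(* Let $C=\{a,b,c\}$ and let $W_4\subseteq C^\omega$ be the set of infinite words which either contain infinitely many occurrences of the factor $bb$, or contain only finitely many occurrences of $b$ and only finitely many occurrences of the factor $aa$. Then the minimal number of states of a deterministic parity automaton recognising $W_4$ is $3$.
   Context: A deterministic parity automaton over $C$ consists of a finite set of states $Q$, an initial state $q_0$, a transition function $Q\times C\to Q$ and a priority function assigning a natural number to each transition. The run on $w\in C^\omega$ is the unique sequence of transitions from $q_0$ reading $w$; $w$ is accepted if the maximal priority occurring infinitely often along the run is even. The automaton recognises the set of accepted words. *)

(* Defs.v *)
From mathcomp Require Import all_boot.
Set Implicit Arguments. Unset Strict Implicit. Unset Printing Implicit Defensive.

Record DPA (C : Type) := {
  state : finType;
  init : state;
  delta : state -> C -> state;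
  prio : state -> C -> nat }.

Definition word (C : Type) := nat -> C.

Fixpoint run_state C (A : DPA C) (w : word C) (n : nat) : state A :=
  match n with
  | 0 => init A
  | n'.+1 => delta (run_state A w n') (w n')
  end.

Definition run_prio C (A : DPA C) (w : word C) (n : nat) : nat :=
  prio (run_state A w n) (w n).

Definition inf_often (P : nat -> Prop) : Prop :=
  forall N, exists n, N <= n /\ P n.

Definition accepts C (A : DPA C) (w : word C) : Prop :=
  exists k, ~~ odd k /\ inf_often (fun n => run_prio A w n = k) /\
    (forall k', inf_often (fun n => run_prio A w n = k') -> k' <= k).

Definition recognises C (A : DPA C) (L : word C -> Prop) : Prop :=
  forall w, accepts A w <-> L w.

Inductive letter := la | lb | lc.

Definition W4 (w : word letter) : Prop :=
  inf_often (fun n => w n = lb /\ w n.+1 = lb)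
  \/ ((exists N, forall n, N <= n -> w n <> lb)
      /\ (exists N, forall n, N <= n -> ~ (w n = la /\ w n.+1 = la))).

(* Main.v *)
Require Import Defs.
From mathcomp Require Import all_boot zify.

Definition isl (x y : letter) : bool :=
  match x, y with la, la | lb, lb | lc, lc => true | _, _ => false end.
Lemma islP x y : isl x y = true <-> x = y.
Proof. by case: x; case: y. Qed.

Definition hascyc (x : letter) (u : seq letter) : bool :=
  has (fun i => isl x (nth la u i) && isl x (nth la u ((i + 1) %% size u)))
      (iota 0 (size u)).
Definition goodcyc u := hascyc lb u || (~~ has (isl lb) u && ~~ hascyc la u).
From Stdlib Require Import Classical.

Lemma not_inf (P : nat -> Prop) : ~ inf_often P -> exists N, forall n, N <= n -> ~ P n.
Proof.
move=> H; apply: NNPP => H1; apply: H => N; apply: NNPP => H2; apply: H1.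
exists N => n Hn HP; apply: H2; by exists n.
Qed.

Definition lasso (v u : seq letter) : word letter := fun n =>
  if n < size v then nth la v n else nth la u ((n - size v) %% size u).

Lemma lasso_after v u m : lasso v u (size v + m) = nth la u (m %% size u).
Proof. by rewrite /lasso ltnNge leq_addr /= addKn. Qed.

Lemma lasso_at v u m : 0 < size u -> size v <= m ->
  lasso v u m = nth la u ((m - size v) %% size u).
Proof. by move=> _ H; rewrite -{1}(subnKC H) lasso_after. Qed.

Lemma cyc_at v u x n : 0 < size u -> size v <= n ->
  lasso v u n = x -> lasso v u n.+1 = x -> hascyc x u.
Proof.
move=> Hu Hn; rewrite -(subnKC Hn) -addnS !lasso_after => H1 H2.
apply/(has_nthP 0); exists ((n - size v) %% size u).
  by rewrite size_iota ltn_mod.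
rewrite nth_iota ?ltn_mod // add0n H1.
rewrite modnDml addn1 H2.
by case: (x).
Qed.

Lemma cyc_inf v u x : 0 < size u -> hascyc x u ->
  forall N, exists n, N <= n /\ lasso v u n = x /\ lasso v u n.+1 = x.
Proof.
move=> Hu /(has_nthP 0) [i]; rewrite size_iota => Hi; rewrite nth_iota // add0n.
move=> /andP [/islP H1 /islP H2] N.
exists (size v + (N * size u + i)); split.
  by apply: leq_trans (leq_addl _ _); apply: leq_trans (leq_addr _ _); rewrite leq_pmulr.
rewrite -addnS !lasso_after -addnS modnMDl modn_small // -addn1 modnMDl.
by rewrite -H1 -H2.
Qed.

Lemma inf_cyc v u x : 0 < size u ->
  inf_often (fun n => lasso v u n = x /\ lasso v u n.+1 = x) <-> hascyc x u.
Proof.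
move=> Hu; split; last exact: cyc_inf.
move=> /(_ (size v)) [n [Hn [H1 H2]]]; exact: cyc_at Hn H1 H2.
Qed.

Lemma fin_letter v u x : 0 < size u ->
  (exists N, forall n, N <= n -> lasso v u n <> x) <-> ~~ has (isl x) u.
Proof.
move=> Hu; split.
  move=> [N HN]; apply/negP => /(has_nthP la) [i Hi /islP Hx].
  apply: (HN (size v + (N * size u + i))).
    by apply: leq_trans (leq_addl _ _); apply: leq_trans (leq_addr _ _); rewrite leq_pmulr.
  by rewrite lasso_after modnMDl modn_small.
move=> /negP H; exists (size v) => n Hn Hx; apply: H.
apply/(has_nthP la); exists ((n - size v) %% size u); first by rewrite ltn_mod.
by rewrite -lasso_at // Hx; apply/islP.
Qed.

Lemma W4_lasso v u : 0 < size u -> W4 (lasso v u) <-> goodcyc u.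
Proof.
move=> Hu; rewrite /W4 /goodcyc (inf_cyc _ _ _ Hu) (fin_letter _ _ _ Hu); split.
  case=> [-> // | [Hb [N HN]]]; rewrite Hb /=; apply/orP; right.
  apply/negP => /(cyc_inf v u la Hu) /(_ N) [n [Hn H]]; exact: HN n Hn H.
case/orP => [-> | /andP [Hb Ha]]; [by left | right; split => //].
exists (size v) => n Hn [H1 H2]; move/negP: Ha; apply; exact: cyc_at Hn H1 H2.
Qed.

Section Lasso.
Variable A : DPA letter.

Lemma run_state_fold (w : word letter) n :
  run_state A w n = foldl (@delta _ A) (init A) (map w (iota 0 n)).
Proof.
elim: n => [//|n IH].
have -> : iota 0 n.+1 = iota 0 (n + 1) by rewrite addn1.
by rewrite iotaD map_cat foldl_cat /= -IH.
Qed.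

Definition st (s : state A) (u : seq letter) j := foldl (@delta _ A) s (take j u).
Definition pr_at s u j := prio (st s u j) (nth la u j).

Fixpoint loopmax (s : state A) (u : seq letter) : nat :=
  if u is x :: u' then maxn (prio s x) (loopmax (delta s x) u') else 0.

Lemma loopmax_ge s u j : j < size u -> pr_at s u j <= loopmax s u.
Proof.
elim: u s j => [//|x u IH] s [|j] /= Hj.
  by rewrite /pr_at /st /= leq_maxl.
apply: leq_trans (leq_maxr _ _); exact: IH.
Qed.

Lemma loopmax_att s u : 0 < size u -> exists j, j < size u /\ pr_at s u j = loopmax s u.
Proof.
elim: u s => [//|x u IH] s _.
case: u IH => [|y u] IH.
  by exists 0; rewrite /pr_at /st /= maxn0.
have [j [Hj Hp]] := IH (delta s x) isT.
case: (leqP (prio s x) (loopmax (delta s x) (y :: u))) => H.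
  exists j.+1; split => //. by rewrite /= (maxn_idPr H) -Hp.
exists 0; split => //. by rewrite /pr_at /st /= (maxn_idPl (ltnW H)).
Qed.

Variables (v u : seq letter) (s : state A).
Hypotheses (Hu : 0 < size u) (Hv : foldl (@delta _ A) (init A) v = s)
  (Hs : foldl (@delta _ A) s u = s).

Lemma run_lasso m : run_state A (lasso v u) (size v + m) = st s u (m %% size u).
Proof.
elim: m => [|m IH].
  rewrite addn0 mod0n /st take0 /= run_state_fold -Hv; congr foldl.
  rewrite -[in RHS](take_size v) -(map_nth_iota0 la) //.
  apply/eq_in_map => i; rewrite mem_iota add0n => /andP [_ Hi].
  by rewrite /lasso Hi.
rewrite addnS /= IH lasso_after.
have Hj : m %% size u < size u by rewrite ltn_mod.
rewrite /st -foldl_rcons -take_nth //.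
have -> : m.+1 %% size u = (m %% size u).+1 %% size u.
  by rewrite -addn1 -modnDml addn1.
case: (ltngtP (m %% size u).+1 (size u)) => H.
- by rewrite (modn_small H).
- by move: (leq_ltn_trans Hj H); rewrite ltnn.
- by rewrite H modnn take0 take_size Hs.
Qed.

Lemma run_prio_lasso m : run_prio A (lasso v u) (size v + m) = pr_at s u (m %% size u).
Proof. by rewrite /run_prio run_lasso lasso_after. Qed.

Lemma inf_prio k : inf_often (fun n => run_prio A (lasso v u) n = k) <->
  exists j, j < size u /\ pr_at s u j = k.
Proof.
split.
  move=> /(_ (size v)) [n [Hn Hk]]; exists ((n - size v) %% size u).
  by rewrite ltn_mod Hu -run_prio_lasso subnKC.
move=> [j [Hj Hk]] N; exists (size v + (N * size u + j)); split.
  by apply: leq_trans (leq_addl _ _); apply: leq_trans (leq_addr _ _); rewrite leq_pmulr.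
by rewrite run_prio_lasso modnMDl modn_small.
Qed.

Lemma accepts_lasso : accepts A (lasso v u) <-> ~~ odd (loopmax s u).
Proof.
have [j0 [Hj0 Hp0]] := loopmax_att s u Hu.
have Hinf : inf_often (fun n => run_prio A (lasso v u) n = loopmax s u).
  by apply/inf_prio; exists j0.
split.
  move=> [k [Hk [Hik Hall]]].
  have H1 := Hall _ Hinf.
  move/inf_prio: Hik => [j [Hj Hpj]].
  have H2 := loopmax_ge s u j Hj; rewrite Hpj in H2.
  by have -> : loopmax s u = k by apply/eqP; rewrite eqn_leq H1 H2.
move=> Hev; exists (loopmax s u); split => //; split => // k' /inf_prio [j [Hj <-]].
exact: loopmax_ge.
Qed.

End Lasso.

Definition code (x : letter) : 'I_3 :=
  match x with la => @Ordinal 3 0 isT | lb => @Ordinal 3 1 isT | lc => @Ordinal 3 2 isT end.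

Definition A3 : DPA letter := {|
  state := 'I_3; init := code lc; delta := fun _ x => code x;
  prio := fun q x => match x with
     | lb => if q == code lb then 4 else 3
     | la => if q == code la then 1 else 0
     | lc => 0 end |}.

Definition P3 (y x : letter) : nat :=
  match x with lb => if isl y lb then 4 else 3 | la => if isl y la then 1 else 0 | lc => 0 end.

Definition prev (w : word letter) n := if n is m.+1 then w m else lc.

Lemma A3_prio w n : run_prio A3 w n = P3 (prev w n) (w n).
Proof.
rewrite /run_prio; have -> : run_state A3 w n = code (prev w n) by case: n.
by case: (prev w n); case: (w n).
Qed.

Lemma A3_rec : recognises A3 W4.
Proof.
move=> w.
have Fv : forall n, [\/ run_prio A3 w n = 0, run_prio A3 w n = 1,
                        run_prio A3 w n = 3 | run_prio A3 w n = 4].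
  move=> n; rewrite A3_prio; case: (prev w n); case: (w n) => /=;
  first [by apply: Or41 | by apply: Or42 | by apply: Or43 | by apply: Or44].
have F4 : forall n, run_prio A3 w n = 4 -> exists m, n = m.+1 /\ w m = lb /\ w n = lb.
  move=> [|m]; rewrite A3_prio /=; first by case: (w 0).
  by exists m; move: H; case: (w m); case: (w m.+1).
have F4' : forall m, w m = lb -> w m.+1 = lb -> run_prio A3 w m.+1 = 4.
  by move=> m H1 H2; rewrite A3_prio /= H1 H2.
have Fb : forall n, w n = lb -> run_prio A3 w n = 3 \/ run_prio A3 w n = 4.
  by move=> n H; rewrite A3_prio H; case: (prev w n); [left|right|left].
have Faa : forall m, w m = la -> w m.+1 = la -> run_prio A3 w m.+1 = 1.
  by move=> m H1 H2; rewrite A3_prio /= H1 H2.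
have F0 : forall m, w m.+1 <> lb -> ~ (w m = la /\ w m.+1 = la) -> run_prio A3 w m.+1 = 0.
  move=> m; rewrite A3_prio /=; case: (w m); case: (w m.+1) => //= H1 H2; by exfalso; apply: H2.
split.
- move=> [k [Hk [Hik Hall]]].
  have [n [_ Hn]] := Hik 0.
  have : k = 0 \/ k = 4.
    move: Hk; rewrite -Hn; case: (Fv n) => ->; by [left | right | ].
  clear Hn; case=> Ek; subst k.
    right.
    have [N4 H4] : exists N, forall n, N <= n -> run_prio A3 w n <> 4.
      by apply: not_inf => Hi; have := Hall 4 Hi.
    have [N3 H3] : exists N, forall n, N <= n -> run_prio A3 w n <> 3.
      by apply: not_inf => Hi; have := Hall 3 Hi.
    have [N1 H1] : exists N, forall n, N <= n -> run_prio A3 w n <> 1.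
      by apply: not_inf => Hi; have := Hall 1 Hi.
    split.
      exists (maxn N3 N4) => m Hm Hb; case: (Fb m Hb).
        by apply: H3; apply: leq_trans Hm; apply: leq_maxl.
      by apply: H4; apply: leq_trans Hm; apply: leq_maxr.
    exists N1 => m Hm [Ha1 Ha2]; apply: (H1 m.+1); [exact: leqW | exact: Faa].
  left => N; have [n' [Hn' H]] := Hik N.+1.
  have [m [Em [Hm1 Hm2]]] := F4 _ H; subst n'.
  by exists m; split => //; rewrite Hm1 -Hm2.
- case.
  + move=> Hbb; exists 4; split => //; split.
      move=> N; have [m [Hm [H1 H2]]] := Hbb N; exists m.+1; split; [exact: leqW | exact: F4'].
    move=> k' /(_ 0) [n [_ <-]]; by case: (Fv n) => ->.
  + move=> [[N1 HN1] [N2 HN2]].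
    have Z : forall n, maxn N1 N2 < n -> run_prio A3 w n = 0.
      move=> [//|m] Hm; apply: F0.
        by apply: HN1; apply: leq_trans (leq_maxl N1 N2) (ltnW Hm).
      by apply: HN2; rewrite -ltnS; apply: leq_ltn_trans (leq_maxr N1 N2) Hm.
    exists 0; split => //; split.
      move=> N; exists (maxn N (maxn N1 N2)).+1; split; first by apply: leqW; apply: leq_maxl.
      by apply: Z; rewrite ltnS leq_maxr.
    move=> k' /(_ (maxn N1 N2).+1) [n [Hn <-]]; by rewrite Z.
Qed.

Definition mkd (b1 b2 b3 b4 b5 b6 : bool) (x : bool) (l : letter) : bool :=
  if x then match l with la => b4 | lb => b5 | lc => b6 end
  else match l with la => b1 | lb => b2 | lc => b3 end.

Fixpoint lm (pr : bool -> letter -> nat) (d : bool -> letter -> bool) x u :=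
  if u is l :: u' then maxn (pr x l) (lm pr d (d x l) u') else 0.

Definition lidx (l : letter) : nat := match l with la => 0 | lb => 1 | lc => 2 end.
Definition tcode (x : bool) l := 3 * x + lidx l.
Fixpoint codes (d : bool -> letter -> bool) x u :=
  if u is l :: u' then tcode x l :: codes d (d x l) u' else [::].
Definition lmax (f : nat -> nat) (c : seq nat) := foldr (fun t m => maxn (f t) m) 0 c.
Definition fpr (pr : bool -> letter -> nat) n :=
  pr (2 < n) (match n %% 3 with 0 => la | 1 => lb | _ => lc end).

Lemma fpr_code pr x l : fpr pr (tcode x l) = pr x l.
Proof. by case: x; case: l. Qed.

Lemma lm_codes pr d x u : lm pr d x u = lmax (fpr pr) (codes d x u).
Proof. by elim: u x => [//|l u IH] x /=; rewrite IH fpr_code. Qed.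

Lemma lmax_ge f c t : t \in c -> f t <= lmax f c.
Proof.
elim: c => [//|a c IH]; rewrite in_cons => /orP [/eqP -> | H] /=.
  exact: leq_maxl.
apply: leq_trans (leq_maxr _ _); exact: IH.
Qed.

Lemma lmax_att f c : c != [::] -> exists2 t, t \in c & f t = lmax f c.
Proof.
elim: c => [//|a c IH] _ /=.
case: (eqVneq c [::]) => [-> | Hc].
  by exists a; rewrite ?inE ?eqxx // maxn0.
have [t Ht Hf] := IH Hc.
case: (leqP (f a) (lmax f c)) => H.
  by exists t; rewrite ?inE ?Ht ?orbT // (maxn_idPr H).
by exists a; rewrite ?inE ?eqxx // (maxn_idPl (ltnW H)).
Qed.

Lemma ex_max (T : eqType) (g : T -> nat) (s : seq T) :
  s != [::] -> exists2 x, x \in s & forall y, y \in s -> g y <= g x.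
Proof.
elim: s => [//|a s IH] _.
case: (eqVneq s [::]) => [-> | Hs].
  by exists a; rewrite ?inE // => y; rewrite inE => /eqP ->.
have [x Hx Hm] := IH Hs.
case: (leqP (g a) (g x)) => H.
  exists x; first by rewrite inE Hx orbT.
  by move=> y; rewrite inE => /orP [/eqP -> // | /Hm].
exists a; first by rewrite inE eqxx.
move=> y; rewrite inE => /orP [/eqP -> // | /Hm Hy].
by apply: leq_trans Hy (ltnW H).
Qed.

Definition crossok (cs : seq (seq nat * bool)) :=
  all (fun c => all (fun t => has (fun c' => (t \in c'.1) && (c'.2 != c.2)) cs) c.1) cs.

Lemma cert f cs : cs != [::] -> all (fun c => c.1 != [::]) cs -> crossok cs ->
  all (fun c => odd (lmax f c.1) == c.2) cs -> False.
Proof.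
move=> Hne Hnn Hx Hp.
have [c0 Hc0 Hm] := @ex_max _ (fun c => lmax f c.1) cs Hne.
have [t Ht Hft] := lmax_att f _ ((allP Hnn) _ Hc0).
have /hasP [c' Hc' /andP [Htc' Hpar]] := (allP ((allP Hx) _ Hc0)) _ Ht.
have E : lmax f c'.1 = lmax f c0.1.
  apply/eqP; rewrite eqn_leq Hm //= -Hft; exact: lmax_ge.
move/eqP: ((allP Hp) _ Hc0); move/eqP: ((allP Hp) _ Hc'); rewrite E => E1 E2.
by rewrite E2 in E1; rewrite E1 eqxx in Hpar.
Qed.

Lemma core_gen (d : bool -> letter -> bool) pr :
  (forall v u, 0 < size u -> foldl d (foldl d false v) u = foldl d false v ->
     odd (lm pr d (foldl d false v) u) = ~~ goodcyc u) ->
  forall (vus : seq (seq letter * seq letter)),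
  0 < size vus ->
  all (fun vu => (0 < size vu.2) && (foldl d (foldl d false vu.1) vu.2 == foldl d false vu.1)) vus ->
  crossok (map (fun vu => (codes d (foldl d false vu.1) vu.2, ~~ goodcyc vu.2)) vus) ->
  False.
Proof.
move=> H vus Hne Hall Hx.
apply: (cert (fpr pr) _ _ _ Hx).
- by case: vus Hne {Hall Hx}.
- rewrite all_map; elim: vus Hall {Hne Hx} => //= [[v u] vus IH] /andP [/andP [Hu _] Hr].
  by rewrite IH // andbT; case: u Hu.
- rewrite all_map; elim: vus Hall {Hne Hx} => //= [[v u] vus IH] /andP [/andP [Hu /eqP Hl] Hr].
  by rewrite IH // andbT /= -lm_codes (H v u Hu Hl) eqxx.
Qed.

Lemma core b1 b2 b3 b4 b5 b6 (pr : bool -> letter -> nat) :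
  let d := mkd b1 b2 b3 b4 b5 b6 in
  (forall v u, 0 < size u -> foldl d (foldl d false v) u = foldl d false v ->
     odd (lm pr d (foldl d false v) u) = ~~ goodcyc u) -> False.
Proof.
move: pr; case: b1; case: b2; case: b3; case: b4; case: b5; case: b6.
- move=> pr d H; exact (@core_gen _ _ H [:: ([:: la], [:: la; lb; lc]); ([:: la], [:: la; lb; lb; lc])] isT isT isT).
- move=> pr d H; exact (@core_gen _ _ H [:: ([:: la], [:: la; lb]); ([:: la], [:: la; lb; lb])] isT isT isT).
- move=> pr d H; exact (@core_gen _ _ H [:: ([:: la], [:: la; lc]); ([:: la], [:: la; la; lc])] isT isT isT).
- move=> pr d H; exact (@core_gen _ _ H [:: ([::], [:: lb; lb; lc; lc]); ([::], [:: lb; lc; lc; lc]); ([::], [:: lc; lb; lc; lc])] isT isT isT).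
- move=> pr d H; exact (@core_gen _ _ H [:: ([:: la], [:: lb; lc]); ([:: la], [:: lb; lb; lc])] isT isT isT).
- move=> pr d H; exact (@core_gen _ _ H [:: ([::], [:: la; la; lc; lc]); ([::], [:: la; lc; lc; lc]); ([::], [:: lc; la; lc; lc])] isT isT isT).
- move=> pr d H; exact (@core_gen _ _ H [:: ([::], [:: lb; la; lc; la]); ([::], [:: lb; la; lc; lb]); ([::], [:: lc; la; lc; lb])] isT isT isT).
- move=> pr d H; exact (@core_gen _ _ H [:: ([::], [:: lb; lb; lc; lc]); ([::], [:: lb; lc; lc; lc]); ([::], [:: lc; lb; lc; lc])] isT isT isT).
- move=> pr d H; exact (@core_gen _ _ H [:: ([:: la], [:: la; lb; lc]); ([:: la], [:: la; lb; lb; lc])] isT isT isT).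
- move=> pr d H; exact (@core_gen _ _ H [:: ([:: la], [:: la; lb]); ([:: la], [:: la; lb; lb])] isT isT isT).
- move=> pr d H; exact (@core_gen _ _ H [:: ([:: la], [:: la; lc]); ([:: la], [:: la; la; lc])] isT isT isT).
- move=> pr d H; exact (@core_gen _ _ H [:: ([::], [:: la; lb; la; lc]); ([::], [:: la; lb; lb; lc]); ([::], [:: la; lc; lb; lc])] isT isT isT).
- move=> pr d H; exact (@core_gen _ _ H [:: ([:: la], [:: lb; lc]); ([:: la], [:: lb; lb; lc])] isT isT isT).
- move=> pr d H; exact (@core_gen _ _ H [:: ([::], [:: la; lb; lb; lc]); ([::], [:: la; lb; lc; lc]); ([::], [:: lb; la; lb; lc]); ([::], [:: lb; lb; la; lc])] isT isT isT).
- move=> pr d H; exact (@core_gen _ _ H [:: ([::], [:: la; lc; la; lc]); ([::], [:: la; lc; lb; lc]); ([::], [:: lb; la; lb; lb]); ([::], [:: lb; lc; la; lc])] isT isT isT).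
- move=> pr d H; exact (@core_gen _ _ H [:: ([::], [:: la; lb; la; lc]); ([::], [:: la; lb; lb; lc]); ([::], [:: lb; la; lb; lb]); ([::], [:: lb; la; lb; lc])] isT isT isT).
- move=> pr d H; exact (@core_gen _ _ H [:: ([:: la], [:: la; lb; lc]); ([:: la], [:: la; lb; lb; lc])] isT isT isT).
- move=> pr d H; exact (@core_gen _ _ H [:: ([:: la], [:: la; lb]); ([:: la], [:: la; lb; lb])] isT isT isT).
- move=> pr d H; exact (@core_gen _ _ H [:: ([:: la], [:: la; lc]); ([:: la], [:: la; la; lc])] isT isT isT).
- move=> pr d H; exact (@core_gen _ _ H [:: ([::], [:: lb; lb; lc; lc]); ([::], [:: lb; lc; la; lb]); ([::], [:: lb; lc; la; lc]); ([::], [:: lc; lb; lc; lc])] isT isT isT).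
- move=> pr d H; exact (@core_gen _ _ H [:: ([:: la], [:: lb; lc]); ([:: la], [:: lb; lb; lc])] isT isT isT).
- move=> pr d H; exact (@core_gen _ _ H [:: ([::], [:: lb; lb; lc; lc]); ([::], [:: lb; lc; lb; lc]); ([:: la], [:: lb])] isT isT isT).
- move=> pr d H; exact (@core_gen _ _ H [:: ([::], [:: lb; lb; lc; la]); ([::], [:: lb; lc; lc; la]); ([:: la], [:: lc])] isT isT isT).
- move=> pr d H; exact (@core_gen _ _ H [:: ([::], [:: la; la; lc; lc]); ([::], [:: la; lc; lc; lc]); ([::], [:: lc; la; lc; lc])] isT isT isT).
- move=> pr d H; exact (@core_gen _ _ H [:: ([:: la], [:: la; lb; lc]); ([:: la], [:: la; lb; lb; lc])] isT isT isT).
- move=> pr d H; exact (@core_gen _ _ H [:: ([:: la], [:: la; lb]); ([:: la], [:: la; lb; lb])] isT isT isT).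
- move=> pr d H; exact (@core_gen _ _ H [:: ([:: la], [:: la; lc]); ([:: la], [:: la; la; lc])] isT isT isT).
- move=> pr d H; exact (@core_gen _ _ H [:: ([::], [:: la; lb; lb; lc]); ([::], [:: la; lb; lc; lb])] isT isT isT).
- move=> pr d H; exact (@core_gen _ _ H [:: ([:: la], [:: lb; lc]); ([:: la], [:: lb; lb; lc])] isT isT isT).
- move=> pr d H; exact (@core_gen _ _ H [:: ([::], [:: la; lb; lc; lb]); ([::], [:: la; lc; lb; lb]); ([:: la], [:: lb])] isT isT isT).
- move=> pr d H; exact (@core_gen _ _ H [:: ([::], [:: la; lc; la; lb]); ([::], [:: la; lc; la; lc]); ([::], [:: la; lc; lb; lb]); ([::], [:: la; lc; lb; lc])] isT isT isT).
- move=> pr d H; exact (@core_gen _ _ H [:: ([::], [:: la; lb; lb; lc]); ([::], [:: la; lb; lc; lb])] isT isT isT).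
- move=> pr d H; exact (@core_gen _ _ H [:: ([:: lb], [:: la; lb; lc]); ([:: lb], [:: la; lb; lb; lc])] isT isT isT).
- move=> pr d H; exact (@core_gen _ _ H [:: ([:: lb], [:: la; lb]); ([:: lb], [:: la; lb; lb])] isT isT isT).
- move=> pr d H; exact (@core_gen _ _ H [:: ([:: lb], [:: la; lc]); ([:: lb], [:: la; la; lc])] isT isT isT).
- move=> pr d H; exact (@core_gen _ _ H [:: ([::], [:: lb; lb; lc; lc]); ([::], [:: lb; lc; lc; lc]); ([::], [:: lc; lb; lc; lc])] isT isT isT).
- move=> pr d H; exact (@core_gen _ _ H [:: ([:: lb], [:: lb; lc]); ([:: lb], [:: lb; lb; lc])] isT isT isT).
- move=> pr d H; exact (@core_gen _ _ H [:: ([::], [:: la; lb; lb; lc]); ([::], [:: la; lc; lb; lc]); ([::], [:: lb; lc; lc; lc]); ([::], [:: lc; lb; lb; lc])] isT isT isT).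
- move=> pr d H; exact (@core_gen _ _ H [:: ([::], [:: lb; la; lc; la]); ([::], [:: lb; la; lc; lb]); ([::], [:: lc; la; lc; lb])] isT isT isT).
- move=> pr d H; exact (@core_gen _ _ H [:: ([::], [:: lb; lb; lc; lc]); ([::], [:: lb; lc; lc; lc]); ([::], [:: lc; lb; lc; lc])] isT isT isT).
- move=> pr d H; exact (@core_gen _ _ H [:: ([:: lb], [:: la; lb; lc]); ([:: lb], [:: la; lb; lb; lc])] isT isT isT).
- move=> pr d H; exact (@core_gen _ _ H [:: ([:: lb], [:: la; lb]); ([:: lb], [:: la; lb; lb])] isT isT isT).
- move=> pr d H; exact (@core_gen _ _ H [:: ([:: lb], [:: la; lc]); ([:: lb], [:: la; la; lc])] isT isT isT).
- move=> pr d H; exact (@core_gen _ _ H [:: ([::], [:: lb; la; lb]); ([::], [:: la; lb; lb; lc]); ([::], [:: la; lb; lc; lc]); ([::], [:: lb; la; lb; lc]); ([::], [:: lb; lb; lb; lc])] isT isT isT).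
- move=> pr d H; exact (@core_gen _ _ H [:: ([:: lb], [:: lb; lc]); ([:: lb], [:: lb; lb; lc])] isT isT isT).
- move=> pr d H; exact (@core_gen _ _ H [:: ([::], [:: la; lc]); ([::], [:: la; la; lc])] isT isT isT).
- move=> pr d H; exact (@core_gen _ _ H [:: ([::], [:: la; lb; lb; lc]); ([::], [:: la; lb; lc; lb]); ([::], [:: lb; lc; lb; lc]); ([:: lb], [:: lc])] isT isT isT).
- move=> pr d H; exact (@core_gen _ _ H [:: ([::], [:: la; lc]); ([::], [:: la; la; lc])] isT isT isT).
- move=> pr d H; exact (@core_gen _ _ H [:: ([:: lc], [:: la; lb; lc]); ([:: lc], [:: la; lb; lb; lc])] isT isT isT).
- move=> pr d H; exact (@core_gen _ _ H [:: ([:: lc], [:: la; lb]); ([:: lc], [:: la; lb; lb])] isT isT isT).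
- move=> pr d H; exact (@core_gen _ _ H [:: ([:: lc], [:: la; lc]); ([:: lc], [:: la; la; lc])] isT isT isT).
- move=> pr d H; exact (@core_gen _ _ H [:: ([::], [:: lb; lb; lc; lc]); ([::], [:: lb; lc; la; lb]); ([::], [:: lb; lc; la; lc]); ([::], [:: lc; lb; lc; lc])] isT isT isT).
- move=> pr d H; exact (@core_gen _ _ H [:: ([:: lc], [:: lb; lc]); ([:: lc], [:: lb; lb; lc])] isT isT isT).
- move=> pr d H; exact (@core_gen _ _ H [:: ([::], [:: lb; lb; lc; lc]); ([::], [:: lb; lc; lb; lc]); ([:: lc], [:: lb])] isT isT isT).
- move=> pr d H; exact (@core_gen _ _ H [:: ([::], [:: lb; lb; lc; la]); ([::], [:: lb; lc; lc; la]); ([:: lc], [:: lc])] isT isT isT).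
- move=> pr d H; exact (@core_gen _ _ H [:: ([::], [:: la; lb; lc; lc]); ([::], [:: la; lc; lb; lb]); ([::], [:: lc; la; lc; lb]); ([::], [:: lc; la; lc; lc])] isT isT isT).
- move=> pr d H; exact (@core_gen _ _ H [:: ([::], [:: la; lb; lc]); ([::], [:: la; lb; lb; lc])] isT isT isT).
- move=> pr d H; exact (@core_gen _ _ H [:: ([::], [:: la; lb; lc]); ([::], [:: la; lb; lb; lc])] isT isT isT).
- move=> pr d H; exact (@core_gen _ _ H [:: ([::], [:: la; lb; lc]); ([::], [:: la; lb; lb; lc])] isT isT isT).
- move=> pr d H; exact (@core_gen _ _ H [:: ([::], [:: la; lb; lc]); ([::], [:: la; lb; lb; lc])] isT isT isT).
- move=> pr d H; exact (@core_gen _ _ H [:: ([::], [:: la; lb; lc]); ([::], [:: la; lb; lb; lc])] isT isT isT).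
- move=> pr d H; exact (@core_gen _ _ H [:: ([::], [:: la; lb; lc]); ([::], [:: la; lb; lb; lc])] isT isT isT).
- move=> pr d H; exact (@core_gen _ _ H [:: ([::], [:: la; lb; lc]); ([::], [:: la; lb; lb; lc])] isT isT isT).
- move=> pr d H; exact (@core_gen _ _ H [:: ([::], [:: la; lb; lc]); ([::], [:: la; lb; lb; lc])] isT isT isT).
Qed.

Lemma lower (A : DPA letter) : recognises A W4 -> 3 <= #|state A|.
Proof.
move=> HA; rewrite leqNgt; apply/negP => Hlt.
pose p := init A.
have [t Ht] : exists t, forall x : state A, x = p \/ x = t.
  case: (pickP (fun x : state A => x != p)) => [t Htp | H0].
  - exists t => x; case: (eqVneq x p) => [->|Hxp]; [by left | right].
    apply/eqP; apply/negPn/negP => Hxt.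
    have U : uniq [:: p; t; x].
      by rewrite /= !inE !negb_or (eq_sym p t) Htp (eq_sym p x) Hxp (eq_sym t x) Hxt.
    move/card_uniqP: U => Hc.
    have := max_card (mem [:: p; t; x]); rewrite Hc /= => H3.
    by move: (leq_ltn_trans H3 Hlt).
  - by exists p => x; left; have := H0 x => /= /negbFE/eqP.
pose g (x : bool) := if x then t else p.
pose bit x l := delta (g x) l != p.
have Hg : forall x l, delta (g x) l = g (bit x l).
  move=> x l; rewrite /bit; case: eqVneq => [-> //|H] /=.
  by case: (Ht (delta (g x) l)) => // E; rewrite E eqxx in H.
pose pr x l := prio (g x) l.
pose d := mkd (bit false la) (bit false lb) (bit false lc)
              (bit true la) (bit true lb) (bit true lc).
apply: (core (bit false la) (bit false lb) (bit false lc)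
              (bit true la) (bit true lb) (bit true lc) pr).
have Hd : forall x l, d x l = bit x l by case; case.
have Hf : forall u x, foldl (@delta _ A) (g x) u = g (foldl d x u).
  by elim=> [//|l u IH] x /=; rewrite Hg IH Hd.
have Hl : forall u x, loopmax A (g x) u = lm pr d x u.
  by elim=> [//|l u IH] x /=; rewrite Hg IH Hd.
move=> v u Hu Hloop.
change (foldl d (foldl d false v) u = foldl d false v) in Hloop.
change (odd (lm pr d (foldl d false v) u) = ~~ goodcyc u).
have Hv : foldl (@delta _ A) (init A) v = g (foldl d false v) by rewrite -Hf.
have Hs : foldl (@delta _ A) (g (foldl d false v)) u = g (foldl d false v).
  by rewrite Hf Hloop.
have H1 := @accepts_lasso A v u _ Hu Hv Hs.
have H2 := W4_lasso v u Hu.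
have H3 := HA (lasso v u).
rewrite Hl in H1.
case: (goodcyc u) H2 H1 H3; case: (odd _) => /= H2 H1 H3 //.
- by have := proj1 H1 (proj2 H3 (proj2 H2 isT)).
- by have := proj1 H2 (proj1 H3 (proj2 H1 isT)).
Qed.

Theorem propositionB2 :
  (exists A : DPA letter, recognises A W4 /\ #|state A| = 3) /\
  (forall A : DPA letter, recognises A W4 -> 3 <= #|state A|).
Proof.
split; last exact: lower.
by exists A3; split; [exact: A3_rec | rewrite /= card_ord].
Qed.
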